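(* Let $\mathcal{A}$ be a pca in which $0,1$ are separable, and let $\gamma:\mathcal{A}\to S$ be a precomplete generalized numbering. Then $\gamma$ is not injective.
   Context: A pca is a set $\mathcal{A}$ with partial binary application containing $k,s$ with $kab=a$, $sab\downarrow$, $sabc\simeq ac(bc)$. With $i=skk$, $\mathsf{false}=ki$, $\langle a,b\rangle=\lambda^*z.zab$ ($\lambda^*$ standard combinatory abstraction), $0=\bar 0=i$, $\overline{n+1}=\langle\mathsf{false},\bar n\rangle$, $1=\bar 1$. $0,1$ are separable in $\mathcal{A}$ if there is a total $c\in\mathcal{A}$ with $ca\in\{0,1\}$ for all $a$ such that $ca=0\Rightarrow a\neq1$ and $ca=1\Rightarrow a\neq 0$. A generalized numbering is a surjective map $\gamma:\mathcal{A}\to S$ onto a set $S$; write $a\sim_\gamma a'$ iff $\gamma(a)=\gamma(a')$. $\gamma$ is precomplete if for every $b\in\mathcal{A}$ there is a total $f\in\mathcal{A}$ (i.e. $fa$ defined for all $a$) such that for all $a\in\mathcal{A}$, $ba\downarrow\Rightarrow fa\sim_\gamma ba$. *)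

(* Defs.v *)
Definition appo {A : Type} (app : A -> A -> option A) (x y : option A) : option A :=
  match x, y with
  | Some a, Some b => app a b
  | _, _ => None
  end.

(* A pca: a set with a partial binary application and elements k, s such that
   k a b = a, s a b is defined, and s a b c ~= a c (b c) (Kleene equality,
   i.e. equality of option values). *)
Record pca := {
  carrier :> Type;
  app : carrier -> carrier -> option carrier;
  pk : carrier;
  ps : carrier;
  k_ax : forall a b : carrier,
      appo app (appo app (Some pk) (Some a)) (Some b) = Some a;
  s_def : forall a b : carrier,
      appo app (appo app (Some ps) (Some a)) (Some b) <> None;
  s_ax : forall a b c : carrier,
      appo app (appo app (appo app (Some ps) (Some a)) (Some b)) (Some c)
      = appo app (appo app (Some a) (Some c)) (appo app (Some b) (Some c))
}.

Section Combinators.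
Variable A : pca.
Local Notation "x @ y" := (appo (app A) x y) (at level 40, left associativity).
Local Notation K := (Some (pk A)).
Local Notation S := (Some (ps A)).

Definition c_i : option A := S @ K @ K.
Definition c_false : option A := K @ c_i.
(* <a,b> = lambda* z. z a b, with the standard combinatory abstraction
   (lambda* z.z = i, lambda* z.c = k c, lambda* z.(t u) = s (lambda* z.t) (lambda* z.u)):
   lambda* z. z a b = s (s i (k a)) (k b). *)
Definition c_pair (a b : option A) : option A := S @ (S @ c_i @ (K @ a)) @ (K @ b).
(* numerals: 0 = i, n+1 = <false, n> *)
Definition c_zero : option A := c_i.
Definition c_one : option A := c_pair c_false c_zero.
End Combinators.

Definition separable01 (A : pca) : Prop :=
  exists c : A,
    forall a : A, exists v : A,
      app A c a = Some v /\
      (Some v = c_zero A \/ Some v = c_one A) /\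
      (Some v = c_zero A -> Some a <> c_one A) /\
      (Some v = c_one A -> Some a <> c_zero A).

Definition gen_numbering (A : pca) (S : Type) (gamma : A -> S) : Prop :=
  forall x : S, exists a : A, gamma a = x.

Definition precomplete (A : pca) (S : Type) (gamma : A -> S) : Prop :=
  forall b : A, exists f : A,
    (forall a : A, exists w : A, app A f a = Some w) /\
    (forall a v : A, app A b a = Some v ->
       exists w : A, app A f a = Some w /\ gamma w = gamma v).

Definition injective_fun {X Y : Type} (f : X -> Y) : Prop :=
  forall x y : X, f x = f y -> x = y.

(* Main.v *)
Require Import Defs.

Section X.
Variable A : pca.
Notation ap := (app A).

Lemma k1 (a : A) : exists e, ap (pk A) a = Some e.
Proof. pose proof (k_ax A a a) as H. simpl in H.
  destruct (ap (pk A) a) eqn:E; [eauto|discriminate]. Qed.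
Lemma k2 (a e b : A) : ap (pk A) a = Some e -> ap e b = Some a.
Proof. intro E. pose proof (k_ax A a b) as H. simpl in H. rewrite E in H. exact H. Qed.
Lemma s1 (a : A) : exists e, ap (ps A) a = Some e.
Proof. pose proof (s_def A a a) as H. simpl in H.
  destruct (ap (ps A) a) eqn:E; [eauto|exfalso; apply H; reflexivity]. Qed.
Lemma s2 (a e b : A) : ap (ps A) a = Some e -> exists g, ap e b = Some g.
Proof. intro E. pose proof (s_def A a b) as H. simpl in H. rewrite E in H.
  simpl in H; destruct (ap e b) eqn:E2; [eauto|exfalso; apply H; reflexivity]. Qed.
Lemma s3 (a b e g c : A) : ap (ps A) a = Some e -> ap e b = Some g ->
  ap g c = appo ap (ap a c) (ap b c).
Proof. intros E G. pose proof (s_ax A a b c) as H. simpl in H.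
  rewrite E in H. simpl in H. rewrite G in H. exact H. Qed.

Lemma pair_k (a : A) : exists e, ap (pk A) a = Some e /\ forall b, ap e b = Some a.
Proof. destruct (k1 a) as [e He]. exists e. split; auto. intro; eapply k2; eauto. Qed.
Lemma pair_s (a b : A) : exists g, appo ap (appo ap (Some (ps A)) (Some a)) (Some b) = Some g
   /\ forall c, ap g c = appo ap (ap a c) (ap b c).
Proof. destruct (s1 a) as [e He]. destruct (s2 a e b He) as [g Hg].
  exists g. simpl. rewrite He. split; auto. intro; eapply s3; eauto. Qed.

End X.

Theorem mainTheorem15 (A : pca) (S : Type) (gamma : A -> S)
  (hsep : separable01 A)
  (hnum : gen_numbering A S gamma)
  (hpre : precomplete A S gamma) :
  ~ injective_fun gamma.
Proof.
  intro Hinj.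
  destruct hsep as [c Hc].
  destruct (pair_k A (pk A)) as [kk [Ekk Hkk]].
  destruct (pair_s A (pk A) (pk A)) as [I0 [EI HI]].
  assert (Ii : forall x, app A I0 x = Some x).
  { intro x. rewrite HI. destruct (k1 A x) as [e He]. rewrite He. simpl. eapply k2; eauto. }
  assert (Ci : c_i A = Some I0) by exact EI.
  destruct (pair_k A I0) as [F [EF HF]].
  assert (Cf : c_false A = Some F) by (unfold c_false; rewrite Ci; exact EF).
  destruct (pair_k A F) as [z1 [Ez1 Hz1]].
  destruct (pair_k A I0) as [z2 [Ez2 Hz2]].
  destruct (pair_s A I0 z1) as [p [Ep Hp]].
  destruct (pair_s A p z2) as [O1 [EO HO]].
  assert (C1 : c_one A = Some O1).
  { unfold c_one, c_pair, c_zero. rewrite Cf, Ci. simpl.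
    rewrite Ez1, Ez2. simpl in Ep. rewrite Ep. simpl in EO. exact EO. }
  assert (Ox : forall x, app A O1 x = appo (app A) (app A x F) (Some I0)).
  { intro x. rewrite HO, Hz2, Hp, Ii, Hz1. simpl. destruct (app A x F); reflexivity. }
  assert (OO : app A O1 O1 = Some I0).
  { rewrite Ox, Ox, HF. simpl. rewrite Ii. simpl. apply Ii. }
  destruct (pair_k A c) as [kc [Ekc Hkc]].
  destruct (pair_s A I0 I0) as [sii [Esii Hsii]].
  destruct (pair_s A kc sii) as [q [Eq Hq]].
  destruct (pair_k A O1) as [kO [EkO HkO]].
  destruct (pair_s A q kO) as [b [Eb Hb]].
  assert (Hbx : forall x, app A b x = appo (app A) (appo (app A) (Some c) (app A x x)) (Some O1)).
  { intro x. rewrite Hb, HkO, Hq, Hkc, Hsii, !Ii. simpl. reflexivity. }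
  destruct (hpre b) as [f [Ftot Fext]].
  destruct (Ftot f) as [v Hv].
  destruct (Hc v) as [w [Hw [Hor [H0 H1]]]].
  unfold c_zero in *. rewrite Ci, C1 in *.
  destruct Hor as [Hw0 | Hw1].
  - injection Hw0 as ->.
    assert (Hbf : app A b f = Some O1) by (rewrite Hbx, Hv; simpl; rewrite Hw; apply Ii).
    destruct (Fext f O1 Hbf) as [w' [Hw' Hg]].
    rewrite Hv in Hw'. injection Hw' as <-. apply Hinj in Hg. subst.
    apply (H0 eq_refl eq_refl).
  - injection Hw1 as ->.
    assert (Hbf : app A b f = Some I0) by (rewrite Hbx, Hv; simpl; rewrite Hw; exact OO).
    destruct (Fext f I0 Hbf) as [w' [Hw' Hg]].
    rewrite Hv in Hw'. injection Hw' as <-. apply Hinj in Hg. subst.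
    apply (H1 eq_refl eq_refl).
Qed.
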